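(* Let $(\mathcal M,\delta)$ be a metric space and let $d$ be a metric on $\mathcal M\times\mathcal M$ satisfying, for all $x,y,u,v\in\mathcal M$, \[ d\big[(x,u),(x,v)\big]=\delta(u,v),\qquad d\big[(x,u),(y,u)\big]=\delta(x,y),\qquad d\big[(x,x),(u,v)\big]\ge\delta(u,v). \] Let $X,Y$ be $\mathcal M$-valued random variables with finite first moments. Let $X'$ be distributed as $X$ and $Y'$ distributed as $Y$, with $X'$ and $Y'$ independent. Then \[ e\big[(X,Y),(X',Y')\big]\le \min\Big\{e\big[(X,X),(X,X')\big],\ e\big[(Y,Y),(Y,Y')\big]\Big\}, \] where in $e[(X,X),(X,X')]$ the variable $X'$ is an independent copy of $X$ (and similarly for $Y$). In the notation of the context: $\mathrm{eCov}(X,Y)\le\min\{\mathrm{eVar}(X),\mathrm{eVar}(Y)\}$.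
   Context: For probability measures $\mu,\nu$ on a metric space $(S,\rho)$ with finite first moments (i.e. $\int\rho(s,s_0)\,d\mu(s)<\infty$ for some $s_0$, and likewise for $\nu$), the earth mover's (Wasserstein-1) distance is $e(\mu,\nu)=\inf_{\gamma}\int\rho(s,t)\,d\gamma(s,t)$, the infimum over all couplings $\gamma$ of $\mu$ and $\nu$. For random elements $U,V$ we write $e(U,V)$ for the distance between their laws. A random variable $X$ in $(\mathcal M,\delta)$ has finite first moment if $\mathbb E\,\delta(X,x_0)<\infty$ for some $x_0\in\mathcal M$. The earth mover's covariance of $\mathcal M$-valued random variables $X,Y$ is $\mathrm{eCov}(X,Y)=e\big[(X,Y),(X',Y')\big]$, the earth mover's distance on $(\mathcal M\times\mathcal M,d)$ between the joint law of $(X,Y)$ and the product of its marginal laws (the law of $(X',Y')$ where $X'\overset{d}{=}X$, $Y'\overset{d}{=}Y$, $X',Y'$ independent). The earth mover's variance is $\mathrm{eVar}(X)=\mathrm{eCov}(X,X)=e\big[(X,X),(X,X')\big]$ with $X'$ an independent copy of $X$. *)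

(* Defs.v *)
From HB Require Import structures.
From mathcomp Require Import all_boot all_order all_algebra.
From mathcomp Require Import all_classical all_reals all_analysis.
Set Implicit Arguments. Unset Strict Implicit. Unset Printing Implicit Defensive.
Import Order.TTheory GRing.Theory Num.Theory.
Local Open Scope classical_set_scope.
Local Open Scope ring_scope.

Definition is_metric (R : realType) (T : Type) (rho : T -> T -> R) : Prop :=
  (forall x y, 0 <= rho x y) /\
  (forall x y, rho x y = 0 <-> x = y) /\
  (forall x y, rho x y = rho y x) /\
  (forall x y z, rho x z <= rho x y + rho y z).

Definition law (R : realType) d d' (Omega : measurableType d)
  (T : measurableType d') (P : probability Omega R) (X : Omega -> T)
  : set T -> \bar R := pushforward P X.

Definition coupling (R : realType) d1 d2 (T1 : measurableType d1)
  (T2 : measurableType d2) (mu : set T1 -> \bar R) (nu : set T2 -> \bar R)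
  (gamma : probability (T1 * T2)%type R) : Prop :=
  (forall A, measurable A -> gamma (fst @^-1` A) = mu A) /\
  (forall B, measurable B -> gamma (snd @^-1` B) = nu B).

Definition emd (R : realType) d (S : measurableType d) (rho : S -> S -> R)
  (mu nu : set S -> \bar R) : \bar R :=
  ereal_inf [set (\int[gamma]_z (rho z.1 z.2)%:E)%E
            | gamma in [set gamma | coupling mu nu gamma]].

Definition same_law (R : realType) d1 d2 d' (O1 : measurableType d1)
  (O2 : measurableType d2) (T : measurableType d') (P1 : probability O1 R)
  (P2 : probability O2 R) (X1 : O1 -> T) (X2 : O2 -> T) : Prop :=
  forall A, measurable A -> law P1 X1 A = law P2 X2 A.

Definition indep2 (R : realType) d d1 d2 (O : measurableType d)
  (T1 : measurableType d1) (T2 : measurableType d2) (P : probability O R)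
  (X : O -> T1) (Y : O -> T2) : Prop :=
  forall A B, measurable A -> measurable B ->
    P (X @^-1` A `&` Y @^-1` B) = (P (X @^-1` A) * P (Y @^-1` B))%E.

Definition finite_first_moment (R : realType) d d' (O : measurableType d)
  (M : measurableType d') (delta : M -> M -> R) (P : probability O R)
  (X : O -> M) : Prop :=
  exists x0 : M, (\int[P]_w (delta (X w) x0)%:E < +oo)%E.

(* Main.v *)
Require Import Defs.
From HB Require Import structures.
From mathcomp Require Import all_boot all_order all_algebra.
From mathcomp Require Import all_classical all_reals all_analysis.
From mathcomp Require Import measurable_realfun.
Import Order.TTheory GRing.Theory Num.Theory.
Local Open Scope classical_set_scope.
Local Open Scope ring_scope.

Definition pfprob {R : realType} {d d'} {T : measurableType d} {T' : measurableType d'}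
  (P : probability T R) {f : T -> T'} (mf : measurable_fun setT f) : probability T' R :=
  distribution P (HB.pack f (isMeasurableFun.Build _ _ _ _ f mf)).

Lemma pfprobE {R : realType} {d d'} {T : measurableType d} {T' : measurableType d'}
  (P : probability T R) {f : T -> T'} (mf : measurable_fun setT f) A :
  pfprob P mf A = P (f @^-1` A).
Proof. by []. Qed.

Lemma int_prod {R : realType} {d d'} {O : measurableType d} {M : measurableType d'}
  (P' : probability O R) (g : O -> (M * M)%type) (mg : measurable_fun setT g)
  (mu nu : probability M R) (f : (M * M)%type -> \bar R)
  (mf : measurable_fun setT f) (f0 : forall z, (0 <= f z)%E) :
  (forall A B, measurable A -> measurable B ->
     P' (g @^-1` (A `*` B)) = (mu A * nu B)%E) ->
  (\int[P']_w f (g w) = \int[(mu \x nu)%E]_z f z)%E.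
Proof.
move=> H.
transitivity (\int[pfprob P' mg]_z f z)%E.
  rewrite /pfprob /distribution /=.
  by rewrite ge0_integral_pushforward //= preimage_setT.
apply: eq_measure_integral => A mA _.
symmetry; apply: (product_measure_unique (m' := pfprob P' mg)) mA.
move=> A1 B1 mA1 mB1; exact: H.
Qed.

Lemma int_transfer {R : realType} {d d' d''} {T : measurableType d} {U : measurableType d'}
  {O : measurableType d''}
  (Q : probability T R) (phi : T -> U) (mphi : measurable_fun setT phi)
  (P2 : probability O R) (k : O -> U) (mk : measurable_fun setT k)
  (h : U -> \bar R) (mh : measurable_fun setT h) (h0 : forall z, (0 <= h z)%E) :
  (forall A, measurable A -> Q (phi @^-1` A) = P2 (k @^-1` A)) ->
  (\int[Q]_z h (phi z) = \int[P2]_w h (k w))%E.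
Proof.
move=> H.
transitivity (\int[pfprob Q mphi]_z h z)%E.
  rewrite /pfprob /distribution /=.
  by rewrite ge0_integral_pushforward //= preimage_setT.
transitivity (\int[pfprob P2 mk]_z h z)%E.
  apply: eq_measure_integral => A mA _; exact: H.
rewrite /pfprob /distribution /=.
by rewrite ge0_integral_pushforward //= preimage_setT.
Qed.

Lemma var_lb {R : realType} {dM} {M : measurableType dM}
  (delta : M -> M -> R) (dist : (M * M)%type -> (M * M)%type -> R)
  (Hdelta : is_metric delta)
  (Hdelta_meas : measurable_fun [set: (M * M)%type] (fun p => delta p.1 p.2))
  (Hdist : is_metric dist)
  (Hdist_meas : measurable_fun [set: ((M * M) * (M * M))%type]
                  (fun p => dist p.1 p.2))
  (Hd1 : forall x u v, dist (x, u) (x, v) = delta u v)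
  (Hd3 : forall x u v, delta u v <= dist (x, x) (u, v))
  {d0} {Omega : measurableType d0} (P : probability Omega R)
  (X : Omega -> M) (mX : measurable_fun [set: Omega] X)
  {d2} {Omega2 : measurableType d2} (P2 : probability Omega2 R)
  (Xa Xb : Omega2 -> M)
  (mXa : measurable_fun [set: Omega2] Xa) (mXb : measurable_fun [set: Omega2] Xb)
  (lXa : same_law P2 P Xa X) (lXb : same_law P2 P Xb X)
  (iX : indep2 P2 Xa Xb) :
  (\int[(pfprob P mX \x pfprob P mX)%E]_z (delta z.1 z.2)%:E
    <= emd dist (law P2 (fun w => (Xa w, Xa w))) (law P2 (fun w => (Xa w, Xb w))))%E.
Proof.
case: Hdelta => dge0 [d0E [dsym dtri]].
case: Hdist => Dge0 [D0E [Dsym Dtri]].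
have mdE : measurable_fun setT (fun p : (M * M)%type => (delta p.1 p.2)%:E).
  exact/measurable_EFinP.
have mDE : measurable_fun setT (fun p : ((M * M) * (M * M))%type => (dist p.1 p.2)%:E).
  exact/measurable_EFinP.
have mpa : measurable_fun setT (fun w => (Xa w, Xa w)).
  exact: measurable_fun_pair.
have mpb : measurable_fun setT (fun w => (Xa w, Xb w)).
  exact: measurable_fun_pair.
have hd0 : forall z : (M * M)%type, (0 <= (delta z.1 z.2)%:E)%E.
  by move=> z; rewrite lee_fin.
apply/ereal_infP => _ [g [c1 c2] <-].
have S1 : (\int[g]_z (delta z.1.1 z.1.2)%:E = 0)%E.
  rewrite (int_transfer _ _ measurable_fst P2 _ mpa _ mdE hd0); last first.
    by move=> A mA; rewrite c1.
  under eq_integral do rewrite (proj2 (d0E _ _) erefl).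
  exact: integral0.
have S2 : (\int[g]_z (delta z.2.1 z.2.2)%:E =
     \int[(pfprob P mX \x pfprob P mX)%E]_z (delta z.1 z.2)%:E)%E.
  rewrite (int_transfer _ _ measurable_snd P2 _ mpb _ mdE hd0); last first.
    by move=> A mA; rewrite c2.
  apply: int_prod => //.
    move=> A B mA mB.
      rewrite (_ : _ @^-1` _ = Xa @^-1` A `&` Xb @^-1` B) //.
      rewrite iX //.
      have := lXa A mA; have := lXb B mB; rewrite /law /pushforward => -> ->.
      by [].
rewrite -S2.
apply: (@le_trans _ _ (\int[g]_z ((dist z.1 z.2)%:E + (delta z.1.1 z.1.2)%:E))%E).
  apply: ge0_le_integral => //.
  - apply/measurable_EFinP; exact: (measurableT_comp Hdelta_meas measurable_snd).
  - apply: emeasurable_funD => //.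
    apply/measurable_EFinP; exact: (measurableT_comp Hdelta_meas measurable_fst).
  - move=> [[a b] [u v]] _ /=; rewrite -EFinD lee_fin.
    apply: (le_trans (Hd3 a u v)).
    apply: (le_trans (Dtri _ (a, b) _)).
    by rewrite Hd1 addrC.
rewrite ge0_integralD //.
- by rewrite S1 adde0.
- by move=> z _; rewrite lee_fin.
- apply/measurable_EFinP; exact: (measurableT_comp Hdelta_meas measurable_fst).
Qed.

Lemma pf_int {R : realType} {d d'} {T : measurableType d} {U : measurableType d'}
  (Q : probability T R) (phi : T -> U) (mphi : measurable_fun setT phi)
  (h : U -> \bar R) (mh : measurable_fun setT h) (h0 : forall z, (0 <= h z)%E) :
  (\int[pfprob Q mphi]_z h z = \int[Q]_w h (phi w))%E.
Proof.
rewrite /pfprob /distribution /=.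
by rewrite ge0_integral_pushforward //= preimage_setT.
Qed.

Lemma mpre {d d'} {T : measurableType d} {U : measurableType d'} (f : T -> U)
  (mf : measurable_fun setT f) A : measurable A -> measurable (f @^-1` A).
Proof. by move=> mA; rewrite -[X in measurable X]setTI; exact: mf. Qed.

Lemma cov_ubX {R : realType} {dM} {M : measurableType dM}
  (delta : M -> M -> R) (dist : (M * M)%type -> (M * M)%type -> R)
  (Hdelta : is_metric delta)
  (Hdelta_meas : measurable_fun [set: (M * M)%type] (fun p => delta p.1 p.2))
  (Hdist : is_metric dist)
  (Hdist_meas : measurable_fun [set: ((M * M) * (M * M))%type]
                  (fun p => dist p.1 p.2))
  (Hd2 : forall x y u, dist (x, u) (y, u) = delta x y)
  {d0} {Omega : measurableType d0} (P : probability Omega R)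
  (X Y : Omega -> M)
  (mX : measurable_fun [set: Omega] X) (mY : measurable_fun [set: Omega] Y)
  {d1} {Omega1 : measurableType d1} (P1 : probability Omega1 R)
  (X' Y' : Omega1 -> M)
  (mX' : measurable_fun [set: Omega1] X') (mY' : measurable_fun [set: Omega1] Y')
  (lX' : same_law P1 P X' X) (lY' : same_law P1 P Y' Y)
  (iXY' : indep2 P1 X' Y') :
  (emd dist (law P (fun w => (X w, Y w))) (law P1 (fun w => (X' w, Y' w)))
   <= \int[(pfprob P mX \x pfprob P mX)%E]_z (delta z.1 z.2)%:E)%E.
Proof.
case: Hdelta => dge0 [d0E [dsym dtri]].
case: Hdist => Dge0 [D0E [Dsym Dtri]].
have mdE : measurable_fun setT (fun p : (M * M)%type => (delta p.1 p.2)%:E).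
  exact/measurable_EFinP.
have mDE : measurable_fun setT (fun p : ((M * M) * (M * M))%type => (dist p.1 p.2)%:E).
  exact/measurable_EFinP.
have hd0 : forall z : (M * M)%type, (0 <= (delta z.1 z.2)%:E)%E.
  by move=> z; rewrite lee_fin.
have hD0 : forall z : ((M * M) * (M * M))%type, (0 <= (dist z.1 z.2)%:E)%E.
  by move=> z; rewrite lee_fin.
have mX1 : measurable_fun setT (fun w : (Omega * Omega)%type => X w.1).
  exact: (measurableT_comp mX measurable_fst).
have mX2 : measurable_fun setT (fun w : (Omega * Omega)%type => X w.2).
  exact: (measurableT_comp mX measurable_snd).
have mY1 : measurable_fun setT (fun w : (Omega * Omega)%type => Y w.1).
  exact: (measurableT_comp mY measurable_fst).
have mXY : measurable_fun setT (fun w => (X w, Y w)).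
  exact: measurable_fun_pair.
have mXY' : measurable_fun setT (fun w => (X' w, Y' w)).
  exact: measurable_fun_pair.
have mG : measurable_fun setT (fun w : (Omega * Omega)%type => (X w.2, Y w.1)).
  exact: measurable_fun_pair.
have mXX : measurable_fun setT (fun w : (Omega * Omega)%type => (X w.1, X w.2)).
  exact: measurable_fun_pair.
have mF : measurable_fun setT
    (fun w : (Omega * Omega)%type => ((X w.1, Y w.1), (X w.2, Y w.1))).
  apply: measurable_fun_pair => //.
  exact: (measurableT_comp mXY measurable_fst).
pose gam := pfprob (P \x P)%E mF.
have e1 B : measurable B ->
    ((pfprob P mX \x pfprob P mY)%E B = pfprob (P \x P)%E mG B).
  move=> mB; apply: (product_measure_unique (m' := pfprob (P \x P)%E mG)) mB.
  move=> A1 B1 mA1 mB1; rewrite /pfprob /distribution /pushforward /=.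
  rewrite (_ : _ @^-1` _ = (Y @^-1` B1) `*` (X @^-1` A1)); last first.
    by apply/seteqP; split => -[w1 w2] /= [].
  rewrite product_measure1E; [|exact: mpre|exact: mpre].
  by rewrite muleC.
have e2 B : measurable B ->
    ((pfprob P mX \x pfprob P mY)%E B = pfprob P1 mXY' B).
  move=> mB; apply: (product_measure_unique (m' := pfprob P1 mXY')) mB.
  move=> A1 B1 mA1 mB1.
  change (P1 (X' @^-1` A1 `&` Y' @^-1` B1) = (P (X @^-1` A1) * P (Y @^-1` B1))%E).
  rewrite iXY' //.
  have := lX' A1 mA1; have := lY' B1 mB1; rewrite /law /pushforward => -> ->.
  by [].
have Hc : coupling (law P (fun w => (X w, Y w))) (law P1 (fun w => (X' w, Y' w))) gam.
  split.
  - move=> A mA; rewrite /pfprob /distribution /pushforward /=.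
    rewrite (_ : _ @^-1` _ = ((fun w => (X w, Y w)) @^-1` A) `*` setT); last first.
      by apply/seteqP; split => -[w1 w2]; rewrite /preimage /setX /= => // -[].
    rewrite product_measure1E; [|exact: mpre|exact: measurableT].
    by rewrite -[RHS]mule1; congr (_ * _)%E; exact: probability_setT.
  - move=> B mB.
    rewrite /pfprob /distribution /pushforward /=.
    have -> : ((fun w : (Omega * Omega)%type => ((X w.1, Y w.1), (X w.2, Y w.1)))
              @^-1` (snd @^-1` B)) = (fun w : (Omega * Omega)%type => (X w.2, Y w.1)) @^-1` B.
      by [].
    rewrite -[LHS]/(pfprob (P \x P)%E mG B) -e1 // e2 //.
apply: (@le_trans _ _ (\int[gam]_z (dist z.1 z.2)%:E)%E).
  by apply: ereal_inf_lbound; exists gam.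
rewrite /gam pf_int //.
under eq_integral do rewrite /= Hd2.
rewrite le_eqVlt; apply/orP; left; apply/eqP.
apply: (int_prod _ _ mXX _ _ _ mdE hd0).
move=> A B mA mB.
rewrite (_ : _ @^-1` _ = (X @^-1` A) `*` (X @^-1` B)) //.
by apply: product_measure1E; exact: mpre.
Qed.

Lemma cov_ubY {R : realType} {dM} {M : measurableType dM}
  (delta : M -> M -> R) (dist : (M * M)%type -> (M * M)%type -> R)
  (Hdelta : is_metric delta)
  (Hdelta_meas : measurable_fun [set: (M * M)%type] (fun p => delta p.1 p.2))
  (Hdist : is_metric dist)
  (Hdist_meas : measurable_fun [set: ((M * M) * (M * M))%type]
                  (fun p => dist p.1 p.2))
  (Hd1 : forall x u v, dist (x, u) (x, v) = delta u v)
  {d0} {Omega : measurableType d0} (P : probability Omega R)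
  (X Y : Omega -> M)
  (mX : measurable_fun [set: Omega] X) (mY : measurable_fun [set: Omega] Y)
  {d1} {Omega1 : measurableType d1} (P1 : probability Omega1 R)
  (X' Y' : Omega1 -> M)
  (mX' : measurable_fun [set: Omega1] X') (mY' : measurable_fun [set: Omega1] Y')
  (lX' : same_law P1 P X' X) (lY' : same_law P1 P Y' Y)
  (iXY' : indep2 P1 X' Y') :
  (emd dist (law P (fun w => (X w, Y w))) (law P1 (fun w => (X' w, Y' w)))
   <= \int[(pfprob P mY \x pfprob P mY)%E]_z (delta z.1 z.2)%:E)%E.
Proof.
case: Hdelta => dge0 [d0E [dsym dtri]].
case: Hdist => Dge0 [D0E [Dsym Dtri]].
have mdE : measurable_fun setT (fun p : (M * M)%type => (delta p.1 p.2)%:E).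
  exact/measurable_EFinP.
have mDE : measurable_fun setT (fun p : ((M * M) * (M * M))%type => (dist p.1 p.2)%:E).
  exact/measurable_EFinP.
have hd0 : forall z : (M * M)%type, (0 <= (delta z.1 z.2)%:E)%E.
  by move=> z; rewrite lee_fin.
have hD0 : forall z : ((M * M) * (M * M))%type, (0 <= (dist z.1 z.2)%:E)%E.
  by move=> z; rewrite lee_fin.
have mX1 : measurable_fun setT (fun w : (Omega * Omega)%type => X w.1).
  exact: (measurableT_comp mX measurable_fst).
have mX2 : measurable_fun setT (fun w : (Omega * Omega)%type => X w.2).
  exact: (measurableT_comp mX measurable_snd).
have mY1 : measurable_fun setT (fun w : (Omega * Omega)%type => Y w.1).
  exact: (measurableT_comp mY measurable_fst).
have mY2 : measurable_fun setT (fun w : (Omega * Omega)%type => Y w.2).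
  exact: (measurableT_comp mY measurable_snd).
have mXY : measurable_fun setT (fun w => (X w, Y w)).
  exact: measurable_fun_pair.
have mXY' : measurable_fun setT (fun w => (X' w, Y' w)).
  exact: measurable_fun_pair.
have mG : measurable_fun setT (fun w : (Omega * Omega)%type => (X w.1, Y w.2)).
  exact: measurable_fun_pair.
have mYY : measurable_fun setT (fun w : (Omega * Omega)%type => (Y w.1, Y w.2)).
  exact: measurable_fun_pair.
have mF : measurable_fun setT
    (fun w : (Omega * Omega)%type => ((X w.1, Y w.1), (X w.1, Y w.2))).
  apply: measurable_fun_pair => //.
  exact: (measurableT_comp mXY measurable_fst).
pose gam := pfprob (P \x P)%E mF.
have e1 B : measurable B ->
    ((pfprob P mX \x pfprob P mY)%E B = pfprob (P \x P)%E mG B).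
  move=> mB; apply: (product_measure_unique (m' := pfprob (P \x P)%E mG)) mB.
  move=> A1 B1 mA1 mB1; rewrite /pfprob /distribution /pushforward /=.
  rewrite (_ : _ @^-1` _ = (X @^-1` A1) `*` (Y @^-1` B1)); last first.
    by [].
  by rewrite product_measure1E; [|exact: mpre|exact: mpre].
have e2 B : measurable B ->
    ((pfprob P mX \x pfprob P mY)%E B = pfprob P1 mXY' B).
  move=> mB; apply: (product_measure_unique (m' := pfprob P1 mXY')) mB.
  move=> A1 B1 mA1 mB1.
  change (P1 (X' @^-1` A1 `&` Y' @^-1` B1) = (P (X @^-1` A1) * P (Y @^-1` B1))%E).
  rewrite iXY' //.
  have := lX' A1 mA1; have := lY' B1 mB1; rewrite /law /pushforward => -> ->.
  by [].
have Hc : coupling (law P (fun w => (X w, Y w))) (law P1 (fun w => (X' w, Y' w))) gam.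
  split.
  - move=> A mA; rewrite /pfprob /distribution /pushforward /=.
    rewrite (_ : _ @^-1` _ = ((fun w => (X w, Y w)) @^-1` A) `*` setT); last first.
      by apply/seteqP; split => -[w1 w2]; rewrite /preimage /setX /= => // -[].
    rewrite product_measure1E; [|exact: mpre|exact: measurableT].
    by rewrite -[RHS]mule1; congr (_ * _)%E; exact: probability_setT.
  - move=> B mB.
    rewrite /pfprob /distribution /pushforward /=.
    have -> : ((fun w : (Omega * Omega)%type => ((X w.1, Y w.1), (X w.1, Y w.2)))
              @^-1` (snd @^-1` B)) = (fun w : (Omega * Omega)%type => (X w.1, Y w.2)) @^-1` B.
      by [].
    rewrite -[LHS]/(pfprob (P \x P)%E mG B) -e1 // e2 //.
apply: (@le_trans _ _ (\int[gam]_z (dist z.1 z.2)%:E)%E).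
  by apply: ereal_inf_lbound; exists gam.
rewrite /gam pf_int //.
under eq_integral do rewrite /= Hd1.
rewrite le_eqVlt; apply/orP; left; apply/eqP.
apply: (int_prod _ _ mYY _ _ _ mdE hd0).
move=> A B mA mB.
rewrite (_ : _ @^-1` _ = (Y @^-1` A) `*` (Y @^-1` B)) //.
by apply: product_measure1E; exact: mpre.
Qed.

Theorem theorem2 (R : realType) (dM : measure_display) (M : measurableType dM)
  (delta : M -> M -> R) (dist : (M * M)%type -> (M * M)%type -> R)
  (Hdelta : is_metric delta)
  (Hdelta_meas : measurable_fun [set: (M * M)%type] (fun p => delta p.1 p.2))
  (Hdist : is_metric dist)
  (Hdist_meas : measurable_fun [set: ((M * M) * (M * M))%type]
                  (fun p => dist p.1 p.2))
  (Hd1 : forall x u v, dist (x, u) (x, v) = delta u v)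
  (Hd2 : forall x y u, dist (x, u) (y, u) = delta x y)
  (Hd3 : forall x u v, delta u v <= dist (x, x) (u, v))
  (* X, Y on a common probability space *)
  (d0 : measure_display) (Omega : measurableType d0) (P : probability Omega R)
  (X Y : Omega -> M)
  (mX : measurable_fun [set: Omega] X) (mY : measurable_fun [set: Omega] Y)
  (HX : finite_first_moment delta P X) (HY : finite_first_moment delta P Y)
  (* X' ~ X, Y' ~ Y, X' and Y' independent *)
  (d1 : measure_display) (Omega1 : measurableType d1) (P1 : probability Omega1 R)
  (X' Y' : Omega1 -> M)
  (mX' : measurable_fun [set: Omega1] X') (mY' : measurable_fun [set: Omega1] Y')
  (lX' : same_law P1 P X' X) (lY' : same_law P1 P Y' Y)
  (iXY' : indep2 P1 X' Y')
  (* Xa ~ X with an independent copy Xb ~ X *)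
  (d2 : measure_display) (Omega2 : measurableType d2) (P2 : probability Omega2 R)
  (Xa Xb : Omega2 -> M)
  (mXa : measurable_fun [set: Omega2] Xa) (mXb : measurable_fun [set: Omega2] Xb)
  (lXa : same_law P2 P Xa X) (lXb : same_law P2 P Xb X)
  (iX : indep2 P2 Xa Xb)
  (* Ya ~ Y with an independent copy Yb ~ Y *)
  (d3 : measure_display) (Omega3 : measurableType d3) (P3 : probability Omega3 R)
  (Ya Yb : Omega3 -> M)
  (mYa : measurable_fun [set: Omega3] Ya) (mYb : measurable_fun [set: Omega3] Yb)
  (lYa : same_law P3 P Ya Y) (lYb : same_law P3 P Yb Y)
  (iY : indep2 P3 Ya Yb) :
  (emd dist (law P (fun w => (X w, Y w))) (law P1 (fun w => (X' w, Y' w)))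
   <= mine (emd dist (law P2 (fun w => (Xa w, Xa w))) (law P2 (fun w => (Xa w, Xb w))))
           (emd dist (law P3 (fun w => (Ya w, Ya w))) (law P3 (fun w => (Ya w, Yb w)))))%E.
Proof.
rewrite le_min; apply/andP; split.
- apply: le_trans (cov_ubX delta dist Hdelta Hdelta_meas Hdist Hdist_meas Hd2 P X Y mX mY P1 X' Y' mX' mY' lX' lY' iXY')
    (var_lb delta dist Hdelta Hdelta_meas Hdist Hdist_meas Hd1 Hd3 P X mX P2 Xa Xb mXa mXb lXa lXb iX).
- apply: le_trans (cov_ubY delta dist Hdelta Hdelta_meas Hdist Hdist_meas Hd1 P X Y mX mY P1 X' Y' mX' mY' lX' lY' iXY')
    (var_lb delta dist Hdelta Hdelta_meas Hdist Hdist_meas Hd1 Hd3 P Y mY P3 Ya Yb mYa mYb lYa lYb iY).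
Qed.
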